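(* Let $n>2$ be an integer, $q\in\mathbb{C}^\times$ and $\beta=-q-q^{-1}$. Every word $c$ in the generators $\Omega,\Omega^{-1},e_0,\dots,e_{n-1}$ of the affine Temperley--Lieb algebra $\mathsf{aTL}_n(\beta)$ can be rewritten, using the defining relations, in one of the three following forms: (i) $c=\Omega^k$ for some $k\in\mathbb{Z}$ (with $\Omega^0=\mathbf{1}$); (ii) $c=w$, where $w$ is a word in the generators $e_j$ only; (iii) $c=\Omega\, w$, where $w$ is a word in the generators $e_j$ only.
   Context: For $n>2$, the affine Temperley--Lieb algebra $\mathsf{aTL}_n(\beta)$ is the unital associative $\mathbb{C}$-algebra generated by $\Omega,\Omega^{-1},e_0,\dots,e_{n-1}$ subject to the relations (indices taken modulo $n$): $e_j^2=\beta e_j$, $e_je_{j\pm1}e_j=e_j$, $e_ie_j=e_je_i$ for $|i-j|>1$, $\Omega e_j\Omega^{-1}=e_{j-1}$, $\Omega\Omega^{-1}=\Omega^{-1}\Omega=\mathbf{1}$, and $\Omega^2e_1=e_{n-1}e_{n-2}\cdots e_2e_1$. *)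

(* Defs.v *)
From HB Require Import structures.
From mathcomp Require Import all_boot all_order all_algebra.
From mathcomp Require Import complex.
From mathcomp Require Export reals.
Set Implicit Arguments. Unset Strict Implicit. Unset Printing Implicit Defensive.
Import Order.TTheory GRing.Theory Num.Theory.
Local Open Scope ring_scope.

Inductive gen (n : nat) : Type := Gom | Gominv | Ge of 'I_n.
Arguments Gom {n}. Arguments Gominv {n}.

Lemma npos_of_gt2 (n : nat) (Hn : (2 < n)%N) : (0 < n)%N.
Proof. exact: ltnW (ltnW Hn). Qed.

Definition Imod (n : nat) (Hn : (2 < n)%N) (k : nat) : 'I_n :=
  Ordinal (ltn_pmod k (npos_of_gt2 Hn)).

Section Eval.
Variables (C : fieldType) (A : algType C) (n : nat).
Variables (Om Omi : A) (e : 'I_n -> A).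

Definition gen_eval (g : gen n) : A :=
  match g with Gom => Om | Gominv => Omi | Ge j => e j end.

Definition word_eval (c : seq (gen n)) : A := \prod_(g <- c) gen_eval g.

Definition Ompow (k : int) : A :=
  match k with Posz m => Om ^+ m | Negz m => Omi ^+ m.+1 end.
End Eval.

Record aTL_rel (C : fieldType) (A : algType C) (n : nat) (Hn : (2 < n)%N)
  (beta : C) (Om Omi : A) (e : 'I_n -> A) : Prop := ATLRel {
  aTL_E := fun k : nat => e (Imod Hn k);
  aTL_sq : forall j : nat, aTL_E j * aTL_E j = beta *: aTL_E j;
  aTL_braid_up : forall j : nat, aTL_E j * aTL_E j.+1 * aTL_E j = aTL_E j;
  aTL_braid_down : forall j : nat,
    aTL_E j.+1 * aTL_E j * aTL_E j.+1 = aTL_E j.+1;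
  aTL_comm : forall i j : 'I_n, i != j -> Imod Hn i.+1 != j ->
    Imod Hn j.+1 != i -> e i * e j = e j * e i;
  aTL_conj : forall j : nat, Om * aTL_E j.+1 * Omi = aTL_E j;
  aTL_invr : Om * Omi = 1;
  aTL_invl : Omi * Om = 1;
  aTL_twist : Om ^+ 2 * aTL_E 1 = \prod_(j <- rev (iota 1 n.-1)) aTL_E j
}.

(* Main.v *)
Require Import Defs.
From HB Require Import structures.
From mathcomp Require Import all_boot all_order all_algebra.
From mathcomp Require Import complex.
From mathcomp Require Import reals.
From mathcomp Require Import zify.
Import Order.TTheory GRing.Theory Num.Theory.
Local Open Scope ring_scope.

Section Proof.
Variables (C : fieldType) (A : algType C) (n : nat) (Hn : (2 < n)%N).
Variables (beta : C) (Om Omi : A) (e : 'I_n -> A).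
Hypothesis H : aTL_rel Hn beta Om Omi e.

Local Notation E k := (e (Imod Hn k)).
Local Notation P w := (\prod_(j <- w) e j).

Lemma invl : Omi * Om = 1. Proof. exact: aTL_invl H. Qed.
Lemma invr : Om * Omi = 1. Proof. exact: aTL_invr H. Qed.

Lemma Econj k : Om * E k.+1 * Omi = E k.
Proof. exact: aTL_conj H k. Qed.

Lemma OmE k : Om * E k.+1 = E k * Om.
Proof. by rewrite -(Econj k) -!mulrA invl mulr1. Qed.

Lemma EOmi k : E k.+1 * Omi = Omi * E k.
Proof. by rewrite -(Econj k) !mulrA invl mul1r. Qed.

Lemma shiftE k : Omi * E k * Om = E k.+1.
Proof. by rewrite -(Econj k) !mulrA invl mul1r -mulrA invl mulr1. Qed.

Lemma Imod_ord (j : 'I_n) : Imod Hn j = j.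
Proof. by apply: val_inj; rewrite /= modn_small. Qed.

Lemma eE (j : 'I_n) : e j = E j.
Proof. by rewrite Imod_ord. Qed.

Lemma ImodS k : Imod Hn (Imod Hn k).+1 = Imod Hn k.+1.
Proof. by apply: val_inj; rewrite /= -addn1 modnDml addn1. Qed.

Lemma ImodDn k : Imod Hn (k + n) = Imod Hn k.
Proof. by apply: val_inj; rewrite /= modnDr. Qed.

Lemma shiftP w : Omi * P w * Om = P (map (fun i => Imod Hn (nat_of_ord i).+1) w).
Proof.
elim: w => [|i w IH]; first by rewrite !big_nil mulr1 invl.
rewrite /= !big_cons -IH -(shiftE i) Imod_ord.
by rewrite !mulrA -[Omi * e i * Om * Omi]mulrA invr mulr1.
Qed.

Lemma OmOmi2 : Omi * Om ^+ 2 = Om.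
Proof. by rewrite expr2 mulrA invl mul1r. Qed.
Lemma Om2Omi : Om ^+ 2 * Omi = Om.
Proof. by rewrite expr2 -mulrA invr mulr1. Qed.
Lemma Omi2Om2 : Omi ^+ 2 * Om ^+ 2 = 1.
Proof. by rewrite !expr2 -!mulrA (mulrA Omi Om Om) invl mul1r invl. Qed.

Lemma nonnil_map (s : seq nat) : s != [::] -> map (Imod Hn) s != [::].
Proof. by case: s. Qed.

Lemma nonnil_map2 (s : seq 'I_n) f : s != [::] -> map f s != [::] :> seq 'I_n.
Proof. by case: s. Qed.

Lemma Om2E k : (0 < k)%N -> exists s, s != [::] /\ Om ^+ 2 * E k = P s.
Proof.
elim: k => // k IH _.
case: k IH => [|k] IH.
  exists (map (Imod Hn) (rev (iota 1 n.-1))); split.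
    apply: nonnil_map; rewrite -size_eq0 size_rev size_iota.
    by case: n Hn => [|[|[|]]].
  by rewrite big_map; exact: (aTL_twist H).
have [s [hs es]] := IH isT.
exists (map (fun i => Imod Hn (nat_of_ord i).+1) s); split; first exact: nonnil_map2.
rewrite -shiftP -es -(shiftE k.+1).
by rewrite !mulrA Om2Omi invl mul1r.
Qed.

Lemma Om2E_all k : exists s, s != [::] /\ Om ^+ 2 * E k = P s.
Proof. by rewrite -ImodDn; apply: Om2E; rewrite addn_gt0 (ltnW (ltnW Hn)) orbT. Qed.

Lemma braid m : \prod_(j <- rev (iota 1 m.+1)) E j * \prod_(j <- iota 2 m) E j
  = E m.+1.
Proof.
elim: m => [|m IH]; first by rewrite /= big_seq1 big_nil mulr1.
have -> : iota 1 m.+2 = iota 1 m.+1 ++ [:: m.+2] by rewrite -{1}[m.+2]addn1 iotaD.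
have -> : iota 2 m.+1 = iota 2 m ++ [:: m.+2] by rewrite -{1}[m.+1]addn1 iotaD.
rewrite rev_cat big_cat big_cat /= !big_seq1.
rewrite mulrA -[E m.+2 * _ * _]mulrA IH.
exact: (aTL_braid_down H m.+1).
Qed.

Lemma Omi2base : Omi ^+ 2 * E n.-1 = P (map (Imod Hn) (iota 1 n.-1)).
Proof.
have hn : n.-1 = (n.-2).+1 by case: n Hn => [|[|]].
rewrite big_map hn -braid -hn -(aTL_twist H).
by rewrite -mulrA mulrA Omi2Om2 mul1r hn big_cons.
Qed.

Lemma Omi2E k : (n.-1 <= k)%N -> exists s, s != [::] /\ Omi ^+ 2 * E k = P s.
Proof.
elim: k => [|k IH] hk.
  by move: hk Hn; lia.
case: (eqVneq k.+1 n.-1) => [hk1|hk1].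
  exists (map (Imod Hn) (iota 1 n.-1)); split.
    apply: nonnil_map; rewrite -size_eq0 size_iota.
    by move: Hn; lia.
  by rewrite hk1 Omi2base.
have hk' : (n.-1 <= k)%N by move: hk hk1; lia.
have [s [hs es]] := IH hk'.
exists (map (fun i => Imod Hn (nat_of_ord i).+1) s); split; first exact: nonnil_map2.
rewrite -shiftP -es -(shiftE k).
by rewrite !mulrA -exprSr exprS.
Qed.

Lemma Omi2E_all k : exists s, s != [::] /\ Omi ^+ 2 * E k = P s.
Proof.
rewrite -ImodDn; apply: Omi2E.
by apply: leq_trans (leq_pred n) (leq_addl k n).
Qed.

Definition good (x : A) :=
  (exists s : seq 'I_n, x = P s) \/ (exists s : seq 'I_n, x = Om * P s).

Lemma cons_of (s : seq 'I_n) : s != [::] -> exists i w, P s = e i * P w.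
Proof. by case: s => // i w _; exists i, w; rewrite big_cons. Qed.

Lemma powN m : forall i w,
  good (Om ^+ m * (e i * P w)) /\ good (Om ^+ m.+1 * (e i * P w)).
Proof.
elim: m => [|m IH] i w.
  split; first by left; exists (i :: w); rewrite expr0 mul1r big_cons.
  by right; exists (i :: w); rewrite expr1 big_cons.
split; first by case: (IH i w).
have [s [hs es]] := Om2E_all i.
have [i' [w' ew]] := @cons_of s hs.
have -> : Om ^+ m.+2 * (e i * P w) = Om ^+ m * (e i' * P (w' ++ w)).
  by rewrite -addn2 exprD -mulrA (mulrA (Om ^+ 2)) [e i]eE es ew big_cat !mulrA.
exact: (IH i' (w' ++ w)).1.
Qed.

Lemma powNeg m : forall i w,
  good (Omi ^+ m * (e i * P w)) /\ good (Omi ^+ m.+1 * (e i * P w)).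
Proof.
elim: m => [|m IH] i w.
  split; first by left; exists (i :: w); rewrite expr0 mul1r big_cons.
  have [s [hs es]] := Omi2E_all i.
  right; exists (s ++ w); rewrite big_cat /= mulrA -es [e i]eE.
  by rewrite !mulrA invr mul1r expr1.
split; first by case: (IH i w).
have [s [hs es]] := Omi2E_all i.
have [i' [w' ew]] := @cons_of s hs.
have -> : Omi ^+ m.+2 * (e i * P w) = Omi ^+ m * (e i' * P (w' ++ w)).
  by rewrite -addn2 exprD -mulrA (mulrA (Omi ^+ 2)) [e i]eE es ew big_cat !mulrA.
exact: (IH i' (w' ++ w)).1.
Qed.

Definition P3 (x : A) :=
  (exists k : int, x = Ompow Om Omi k)
  \/ (exists w : seq 'I_n, x = P w)
  \/ (exists w : seq 'I_n, x = Om * P w).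

Lemma good_P3 x : good x -> P3 x.
Proof. by case=> h; right; [left|right]. Qed.

Lemma EOmpow k m : E k * Om ^+ m = Om ^+ m * E (k + m).
Proof.
elim: m k => [|m IH] k; first by rewrite expr0 mulr1 mul1r addn0.
by rewrite exprS mulrA -OmE -mulrA IH mulrA addSnnS.
Qed.

Lemma EOmipow k m : E (k + m) * Omi ^+ m = Omi ^+ m * E k.
Proof.
elim: m k => [|m IH] k; first by rewrite expr0 mulr1 mul1r addn0.
by rewrite exprS mulrA addnS EOmi -mulrA IH mulrA.
Qed.

Lemma main c : P3 (word_eval Om Omi e c).
Proof.
elim: c => [|g c IH].
  by left; exists 0; rewrite /word_eval big_nil.
rewrite /word_eval big_cons -/(word_eval Om Omi e c).
case: g => [||j] /=.
- case: IH => [[[m|m] ->]|[[w ->]|[w ->]]].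
  + by left; exists (Posz m.+1); rewrite /= exprS.
  + case: m => [|m].
      by left; exists 0; rewrite /= expr1 invr.
    by left; exists (Negz m); rewrite /= exprS mulrA invr mul1r.
  + by right; right; exists w.
  + case: w => [|i w].
      by left; exists 2; rewrite big_nil mulr1 /= expr2.
    by rewrite big_cons mulrA -expr2; apply: good_P3; exact: (powN 2 i w).1.
- case: IH => [[[m|m] ->]|[[w ->]|[w ->]]].
  + case: m => [|m].
      by left; exists (Negz 0); rewrite /= expr0 mulr1 expr1.
    by left; exists (Posz m); rewrite /= exprS mulrA invl mul1r.
  + by left; exists (Negz m.+1); rewrite /= [Omi ^+ m.+2]exprS.
  + case: w => [|i w].
      by left; exists (Negz 0); rewrite big_nil mulr1 /= expr1.
    have := (powNeg 0 i w).2; rewrite expr1 big_cons; exact: good_P3.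
  + by right; left; exists w; rewrite mulrA invl mul1r.
- case: IH => [[[m|m] ->]|[[w ->]|[w ->]]].
  + rewrite /= [e j]eE EOmpow.
    have := (powN m (Imod Hn (j + m)) [::]).1; rewrite big_nil mulr1; exact: good_P3.
  + rewrite /=.
    have -> : e j = E (j + m.+1 * n.-1 + m.+1).
      congr e; apply: val_inj => /=.
      rewrite -addnA -mulnSr prednK ?(ltnW (ltnW Hn)) //.
      by rewrite addnC modnMDl modn_small.
    rewrite EOmipow.
    have := (powNeg m (Imod Hn (j + m.+1 * n.-1)) [::]).2; rewrite big_nil mulr1; exact: good_P3.
  + by right; left; exists (j :: w); rewrite big_cons.
  + right; right; exists (Imod Hn j.+1 :: w).
    by rewrite big_cons mulrA [e j]eE -OmE -mulrA.
Qed.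

End Proof.

Theorem proposition2p1 (R : realType) (n : nat) (Hn : (2 < n)%N)
  (q : R[i]) (hq : q != 0)
  (A : algType R[i]) (Om Omi : A) (e : 'I_n -> A) :
  aTL_rel Hn (- q - q^-1) Om Omi e ->
  forall c : seq (gen n),
    (exists k : int, word_eval Om Omi e c = Ompow Om Omi k)
    \/ (exists w : seq 'I_n, word_eval Om Omi e c = \prod_(j <- w) e j)
    \/ (exists w : seq 'I_n, word_eval Om Omi e c = Om * \prod_(j <- w) e j).
Proof. move=> H c. have h := @main _ _ _ _ _ _ _ _ H c. exact h. Qed.
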